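(* Let $A$ and $C$ be groups, and let $C$ act on $A$ by automorphisms in such a way that the induced action of $C$ on the abelianization $A/[A,A]$ is trivial. Then for every $m\geq 1$, $$\Gamma_m(A\rtimes C)=\Gamma_m(A)\rtimes\Gamma_m(C)\quad\text{and}\quad D_m(A\rtimes C)=D_m(A)\rtimes D_m(C).$$
   Context: For a group $G$, the lower central series is defined by $\Gamma_1(G)=G$ and $\Gamma_i(G)=[\Gamma_{i-1}(G),G]$ for $i\ge 2$. The rational lower central series is defined by $D_1(G)=G$ and, for $i\geq 2$, $D_i(G)=\{x\in G \mid x^k\in\Gamma_i(G)\text{ for some integer }k\geq 1\}$. Here $A\rtimes C$ is the semidirect product defined by the given action, and $A$, $C$ are viewed as subgroups of it. *)

(* Defs.v *)
From HB Require Import structures.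
From mathcomp Require Import all_boot.

Set Implicit Arguments.
Unset Strict Implicit.
Unset Printing Implicit Defensive.

Local Open Scope group_scope.

Inductive gen_sub (G : groupType) (S : G -> Prop) : G -> Prop :=
  | gen_base x : S x -> gen_sub S x
  | gen_one : gen_sub S 1
  | gen_mul x y : gen_sub S x -> gen_sub S y -> gen_sub S (x * y)
  | gen_inv x : gen_sub S x -> gen_sub S x^-1.

Definition comm_sub (G : groupType) (H : G -> Prop) : G -> Prop :=
  gen_sub (fun z => exists x y, H x /\ z = [~ x, y]).

(* Lower central series: lcs G 1 = G, lcs G (i+1) = [lcs G i, G]
   (lcs G 0 = G is an irrelevant convention). *)
Fixpoint lcs (G : groupType) (n : nat) : G -> Prop :=
  match n with
  | 0 | 1 => fun _ => True
  | S p => comm_sub (@lcs G p)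
  end.

Definition rlcs (G : groupType) (n : nat) : G -> Prop :=
  fun x => exists k : nat, (1 <= k)%N /\ @lcs G n (x ^+ k).

Record aut_action (A C : groupType) := AutAction {
  act :> C -> A -> A;
  act_morph : forall c a b, act c (a * b) = act c a * act c b;
  act_one : forall a, act 1 a = a;
  act_mul : forall c d a, act (c * d) a = act c (act d a)
}.

Section Sdprod.
Variables (A C : groupType) (phi : aut_action A C).

Definition sdprod (psi : aut_action A C) : Type := (A * C)%type.
HB.instance Definition _ := Choice.on (sdprod phi).

Definition sd_one : sdprod phi := (1, 1).
Definition sd_mul (x y : sdprod phi) : sdprod phi := (x.1 * phi x.2 y.1, x.2 * y.2).
Definition sd_inv (x : sdprod phi) : sdprod phi := (phi x.2^-1 x.1^-1, x.2^-1).

Lemma act_1 c : phi c 1 = 1.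
Proof.
apply: (@mulIg _ (phi c 1)); rewrite -act_morph !mul1g //.
Qed.

Lemma sd_mulA : associative sd_mul.
Proof.
move=> [a c] [a' c'] [a'' c'']; rewrite /sd_mul /=.
by rewrite act_morph act_mul !mulgA.
Qed.

Lemma sd_mul1 : left_id sd_one sd_mul.
Proof. by move=> [a c]; rewrite /sd_mul /= act_one !mul1g. Qed.

Lemma sd_mulg1 : right_id sd_one sd_mul.
Proof. by move=> [a c]; rewrite /sd_mul /= act_1 !mulg1. Qed.

Lemma sd_mulV : left_inverse sd_one sd_inv sd_mul.
Proof.
by move=> [a c]; rewrite /sd_mul /sd_inv /= -act_morph mulVg act_1 mulVg.
Qed.

Lemma sd_mulgV : right_inverse sd_one sd_inv sd_mul.
Proof.
by move=> [a c]; rewrite /sd_mul /sd_inv /= -act_mul !mulgV act_one mulgV.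
Qed.

HB.instance Definition _ :=
  isGroup.Build (sdprod phi) sd_mulA sd_mul1 sd_mulg1 sd_mulV sd_mulgV.

End Sdprod.


(* The subgroup H |x K = {(a, c) | a in H, c in K} of A ><| C, i.e. the
   internal semidirect product of H <= A and K <= C. *)
Definition sd_sub (A C : groupType) (phi : aut_action A C)
  (H : A -> Prop) (K : C -> Prop) : sdprod phi -> Prop :=
  fun x => H x.1 /\ K x.2.

Arguments lcs : clear implicits.
Arguments rlcs : clear implicits.
Arguments sd_sub {A C} phi H K _.

(* Main.v *)
Require Import Defs.
From HB Require Import structures.
From mathcomp Require Import all_boot.
Set Implicit Arguments.
Unset Strict Implicit.
Unset Printing Implicit Defensive.
Local Open Scope group_scope.

Ltac gsimpl := rewrite /commg /conjg;
  repeat (rewrite ?invgM ?invgK ?mulgA ?mulgK ?mulgVK ?mulg1 ?mul1g ?invg1 ?mulgV ?mulVg).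

Section Basic.
Variable X : groupType.
Implicit Types x y z g : X.

Lemma commMl x y z : [~ x * y, z] = [~ x, z] ^ y * [~ y, z].
Proof. by gsimpl. Qed.
Lemma commMr x y z : [~ x, y * z] = [~ x, z] * [~ x, y] ^ z.
Proof. by gsimpl. Qed.
Lemma commVl x z : [~ x^-1, z] = ([~ x, z] ^ x^-1)^-1.
Proof. by gsimpl. Qed.
Lemma conj_comm x g : x ^ g = x * [~ x, g].
Proof. by gsimpl. Qed.
Lemma hall_witt x y z :
  [~ x, y^-1, z] ^ y * [~ y, z^-1, x] ^ z * [~ z, x^-1, y] ^ x = 1.
Proof. by gsimpl. Qed.
End Basic.
Section Gen.
Variable X : groupType.
Implicit Types x y z g : X.

Definition subgrp (P : X -> Prop) :=
  [/\ P 1, forall x y, P x -> P y -> P (x * y) & forall x, P x -> P x^-1].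
Definition normalin (K P : X -> Prop) := forall z g, P z -> K g -> P (z ^ g).
Definition allX : X -> Prop := fun _ => True.

Lemma gen_subgrp S : subgrp (gen_sub S).
Proof. split; [exact: gen_one | exact: gen_mul | exact: gen_inv]. Qed.

Lemma gen_min S P : subgrp P -> (forall x, S x -> P x) ->
  forall z, gen_sub S z -> P z.
Proof. by case=> P1 PM PV SP z; elim=> // *; [apply: (PM) | apply: (PV)]. Qed.

Lemma gen_mono (S T : X -> Prop) : (forall x, S x -> T x) ->
  forall z, gen_sub S z -> gen_sub T z.
Proof.
move=> ST; apply: gen_min; first exact: gen_subgrp.
by move=> x /ST; apply: gen_base.
Qed.

Lemma gen_normal K S : (forall z g, S z -> K g -> S (z ^ g)) ->
  normalin K (gen_sub S).
Proof.
move=> SJ z g Sz Kg; move: z Sz.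
apply: (gen_min (P := fun z => gen_sub S (z ^ g))).
  split; first by rewrite conj1g; apply: gen_one.
    by move=> x y Hx Hy; rewrite conjMg; apply: gen_mul.
  by move=> x Hx; rewrite conjVg; apply: gen_inv.
by move=> x Sx; apply: gen_base; apply: SJ.
Qed.

Lemma subgrp_X P : subgrp P -> forall x n, P x -> P (x ^+ n).
Proof.
case=> P1 PM _ x n Px; elim: n => [|n IH]; first by rewrite expg0.
by rewrite expgS; apply: (PM).
Qed.

Lemma subgrp_J P : subgrp P -> forall x g, P x -> P g -> P (x ^ g).
Proof.
case=> P1 PM PV x g Px Pg; rewrite /conjg.
exact: (PM _ _ (PV _ Pg) (PM _ _ Px Pg)).
Qed.

Lemma subgrp_R P : subgrp P -> forall x g, P x -> P g -> P [~ x, g].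
Proof.
move=> sP x g Px Pg; case: (sP) => _ PM PV; rewrite /commg.
by apply: (PM); [apply: (PV) | apply: subgrp_J].
Qed.

Lemma comm_gen_l K M S t : subgrp M -> normalin K M ->
  (forall z, gen_sub S z -> K z) -> (forall s, S s -> M [~ s, t]) ->
  forall u, gen_sub S u -> M [~ u, t].
Proof.
move=> [M1 MM MV] nM SK St; apply: gen_sub_ind.
- exact: St.
- by rewrite comm1g.
- move=> x y Gx Mx Gy My; rewrite commMl; apply: (MM) => //.
  by apply: nM => //; apply: SK.
- move=> x Gx Mx; rewrite commVl; apply: (MV); apply: nM => //.
  by apply: SK; apply: gen_inv.
Qed.

End Gen.

Section Hom.
Variables X Y : groupType.
Variable f : X -> Y.
Hypothesis fM : forall x y, f (x * y) = f x * f y.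

Lemma ghom1 : f 1 = 1.
Proof. by apply: (@mulIg _ (f 1)); rewrite -fM !mul1g. Qed.

Lemma ghomV x : f x^-1 = (f x)^-1.
Proof. by apply: esym; apply: mulg1_eq; rewrite -fM mulgV ghom1. Qed.

Lemma ghomJ x y : f (x ^ y) = f x ^ f y.
Proof. by rewrite /conjg !fM ghomV. Qed.

Lemma ghomR x y : f [~ x, y] = [~ f x, f y].
Proof. by rewrite /commg fM ghomV ghomJ. Qed.

Lemma ghomX x n : f (x ^+ n) = f x ^+ n.
Proof. by elim: n => [|n IH]; rewrite ?expg0 ?ghom1 // !expgS fM IH. Qed.

Lemma gen_hom (S : X -> Prop) (T : Y -> Prop) :
  (forall s, S s -> T (f s)) -> forall z, gen_sub S z -> gen_sub T (f z).
Proof.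
move=> ST; apply: (gen_min (P := fun z => gen_sub T (f z))).
  split; first by rewrite ghom1; apply: gen_one.
    by move=> x y Hx Hy; rewrite fM; apply: gen_mul.
  by move=> x Hx; rewrite ghomV; apply: gen_inv.
by move=> s /ST; apply: gen_base.
Qed.

Lemma lcs_hom n z : lcs X n z -> lcs Y n (f z).
Proof.
elim: n z => [|[|n] IH] z //= Hz.
apply: gen_hom Hz => s [x [y [Hx ->]]]; exists (f x), (f y).
by rewrite ghomR; split => //; apply: IH.
Qed.
End Hom.

Section Lcs.
Variable X : groupType.
Implicit Types x y z g : X.

Lemma lcs_subgrp n : subgrp (lcs X n).
Proof. by case: n => [|[|n]] //=; exact: gen_subgrp. Qed.

Lemma lcs_normal n : normalin (@allX X) (lcs X n).
Proof.
elim: n => [|[|n] IH] //=; apply: gen_normal => _ g [x [y [Hx ->]]] _.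
by exists (x ^ g), (y ^ g); rewrite conjRg; split => //; apply: IH.
Qed.

Lemma lcs_comm n x y : lcs X n x -> lcs X n.+1 [~ x, y].
Proof. by case: n => [|n] //= Hx; apply: gen_base; exists x, y. Qed.

Lemma lcs_decr n x : lcs X n.+1 x -> lcs X n x.
Proof.
case: n => [|n] //; apply: gen_min; first exact: lcs_subgrp.
move=> _ [u [y [Hu ->]]]; rewrite commgEl.
case: (lcs_subgrp n.+1) => _ PM PV; apply: (PM); first exact: PV.
exact: lcs_normal.
Qed.

Lemma lcs1 n : lcs X n 1.
Proof. by case: (lcs_subgrp n). Qed.

Lemma filt_lcs (F : nat -> X -> Prop) :
  (forall i, subgrp (F i)) -> (forall i, normalin (@allX X) (F i)) ->
  (forall i u y, F i u -> F i.+1 [~ u, y]) ->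
  forall j i u v, F i u -> lcs X j.+1 v -> F (i + j.+1)%N [~ u, v].
Proof.
move=> sF nF stF; elim=> [|j IH] i u v Fu Hv.
  by rewrite addn1; apply: stF.
have sM := sF (i + j.+2)%N.
case: (sM) => _ _ MV.
rewrite -invgR; apply: (MV); move: v Hv.
apply: (comm_gen_l (K := @allX X)) => //.
move=> _ [w [g [Hw ->]]].
have HW := hall_witt w g^-1 u; rewrite invgK in HW.
set a := [~ w, g, u] ^ g^-1 in HW.
set b := [~ g^-1, u^-1, w] ^ u in HW.
set c := [~ u, w^-1, g^-1] ^ w in HW.
have Ha : a = (b * c)^-1.
  have : a^-1 = b * c by apply: mulg1_eq; rewrite mulgA.
  by move/(congr1 (@inv _)); rewrite invgK.
have Mb : F (i + j.+2)%N b.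
  apply: (nF) => //; rewrite -(invgR u^-1 g^-1).
  have -> : (i + j.+2 = i.+1 + j.+1)%N by rewrite addSnnS.
  apply: IH => //; case: (sF i.+1) => _ _ V; apply: V; apply: stF.
  by case: (sF i) => _ _ V; apply: V.
have Mc : F (i + j.+2)%N c.
  apply: (nF) => //; rewrite addnS; apply: stF; apply: IH => //.
  by case: (lcs_subgrp j.+1) => _ _ V; apply: V.
have : F (i + j.+2)%N a by rewrite Ha; apply: (MV); case: sM => _ M _; apply: M.
by move=> Fa; have := nF _ _ g Fa I; rewrite /a conjgKV.
Qed.

Lemma lcs_lcs j i u v : lcs X i u -> lcs X j.+1 v -> lcs X (i + j.+1)%N [~ u, v].
Proof.
apply: filt_lcs; [exact: lcs_subgrp | exact: lcs_normal | ].
by move=> i' u' y; apply: lcs_comm.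
Qed.

End Lcs.
Section Act.
Variables (A C : groupType) (phi : aut_action A C).
Hypothesis htriv : forall (c : C) (a : A), lcs A 2 (a^-1 * phi c a).

Lemma phiM c : forall x y, phi c (x * y) = phi c x * phi c y.
Proof. exact: act_morph. Qed.

Lemma phiV c a : phi c a^-1 = (phi c a)^-1.
Proof. exact: (@ghomV A A (phi c) (phiM c) a). Qed.

Lemma phi_lcs n c a : lcs A n a -> lcs A n (phi c a).
Proof. exact: (@lcs_hom A A (phi c) (phiM c) n a). Qed.

Lemma delta_lcs n : forall c a, lcs A n.+1 a -> lcs A n.+2 (a^-1 * phi c a).
Proof.
elim: n => [|n IH] c a; first by move=> _; apply: htriv.
move=> Ha; move: a Ha c.
have sN := @lcs_subgrp A n.+3; case: (sN) => N1 NM NV.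
have nN := @lcs_normal A n.+3.
apply: gen_sub_ind.
- move=> _ [x [y [Hx ->]]] c.
  have {}Hx : lcs A n.+1 x := Hx.
  rewrite (ghomR (phiM c)).
  set u := x^-1 * phi c x; set v := y^-1 * phi c y.
  have Hu : lcs A n.+2 u by apply: IH.
  have Hv : lcs A 2 v by apply: htriv.
  have -> : phi c x = x * u by rewrite /u mulVKg.
  have -> : phi c y = y * v by rewrite /v mulVKg.
  set w := [~ x, y].
  have Hw : lcs A n.+2 w by apply: lcs_comm.
  have e0 : lcs A n.+3 [~ x, v].
    have := lcs_lcs (j := 1) Hx Hv; by rewrite addn2.
  have e1 : lcs A n.+3 [~ w, v] by apply: lcs_comm.
  have e2 : lcs A n.+3 [~ u, y * v] by apply: lcs_comm.
  have HM : lcs A n.+2 ([~ x, v] * w * [~ w, v]).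
    case: (@lcs_subgrp A n.+2) => _ M _; apply: (M); [apply: (M) => //|].
      exact: lcs_decr.
    exact: lcs_decr.
  have e3 : lcs A n.+3 [~ [~ x, v] * w * [~ w, v], u] by apply: lcs_comm.
  have -> : [~ x * u, y * v] =
     [~ x, v] * w * [~ w, v] * [~ [~ x, v] * w * [~ w, v], u] * [~ u, y * v].
    rewrite commMl commMr conj_comm -/w (conj_comm w v).
    by rewrite !mulgA.
  have -> : w^-1 * ([~ x, v] * w * [~ w, v] * [~ [~ x, v] * w * [~ w, v], u] * [~ u, y * v])
     = [~ x, v] ^ w * ([~ w, v] * [~ [~ x, v] * w * [~ w, v], u] * [~ u, y * v]).
    by gsimpl.
  apply: (NM); first exact: nN.
  by apply: (NM) => //; apply: (NM).
- by move=> c; rewrite invg1 mul1g (ghom1 (phiM c)).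
- move=> a b _ Ha _ Hb c.
  have -> : (a * b)^-1 * phi c (a * b) = (a^-1 * phi c a) ^ b * (b^-1 * phi c b).
    by rewrite phiM; gsimpl.
  by apply: (NM); [apply: (nN)|].
- move=> a _ Ha c.
  have -> : a^-1^-1 * phi c a^-1 = ((a^-1 * phi c a)^-1) ^ a^-1.
    by rewrite phiV; gsimpl.
  by apply: (nN) => //; apply: (NV).
Qed.

End Act.
Section SD.
Variables (A C : groupType) (phi : aut_action A C).
Hypothesis htriv : forall (c : C) (a : A), lcs A 2 (a^-1 * phi c a).
Local Notation G := (sdprod phi).

Lemma sdmulE (x y : G) : x * y = (x.1 * phi x.2 y.1, x.2 * y.2).
Proof. by []. Qed.
Lemma sdinvE (x : G) : x^-1 = (phi x.2^-1 x.1^-1, x.2^-1).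
Proof. by []. Qed.
Lemma sdoneE : (1 : G) = (1, 1).
Proof. by []. Qed.

Definition iota (a : A) : G := (a, 1).
Definition kap (c : C) : G := (1, c).

Lemma phi1 c : phi c 1 = 1.
Proof. exact: (@ghom1 A A (phi c) (phiM phi c)). Qed.

Lemma iotaM : forall a b, iota (a * b) = iota a * iota b.
Proof. by move=> a b; rewrite sdmulE /= act_one mulg1. Qed.

Lemma kapM : forall c d, kap (c * d) = kap c * kap d.
Proof. by move=> c d; rewrite sdmulE /= phi1 mulg1. Qed.

Lemma decomp (z : G) : z = iota z.1 * kap z.2.
Proof. by case: z => a c; rewrite sdmulE /= phi1 mulg1 mul1g. Qed.

Lemma sndM (x y : G) : (x * y).2 = x.2 * y.2.
Proof. by []. Qed.

Lemma iotaJ a (g : G) : iota a ^ g = iota (phi g.2^-1 (a ^ g.1)).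
Proof.
case: g => b d; rewrite /conjg !sdmulE sdinvE /= act_one mul1g mulVg.
by rewrite -phiM.
Qed.

Definition Ffil (i : nat) (z : G) := exists2 a, z = iota a & lcs A i a.

Lemma F_subgrp i : subgrp (Ffil i).
Proof.
case: (@lcs_subgrp A i) => L1 LM LV.
split.
- by exists 1.
- by move=> _ _ [a -> Ha] [b -> Hb]; exists (a * b); rewrite ?iotaM //; apply: (LM).
- move=> _ [a -> Ha]; exists a^-1; last by apply: (LV).
  by rewrite /iota sdinvE /= invg1 act_one.
Qed.

Lemma F_normal i : normalin (@allX G) (Ffil i).
Proof.
move=> _ g [a -> Ha] _; rewrite iotaJ; eexists; first reflexivity.
by apply: phi_lcs; apply: lcs_normal.
Qed.

Lemma F_step i u (y : G) : Ffil i u -> Ffil i.+1 [~ u, y].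
Proof.
case=> a -> Ha; rewrite commgEl iotaJ.
have -> : (iota a)^-1 = iota a^-1 by rewrite /iota sdinvE /= invg1 act_one.
rewrite -iotaM; eexists; first reflexivity.
case: i Ha => [|n] Ha //.
set p := phi y.2^-1 (a ^ y.1).
have -> : a^-1 * p = [~ a, y.1] * ((a ^ y.1)^-1 * p) by gsimpl.
case: (@lcs_subgrp A n.+2) => _ LM _; apply: (LM); first exact: lcs_comm.
by apply: delta_lcs => //; apply: lcs_normal.
Qed.

Definition Ssub n (z : G) := lcs A n z.1 /\ lcs C n z.2.

Lemma S_subgrp n : subgrp (Ssub n).
Proof.
case: (@lcs_subgrp A n) => L1 LM LV; case: (@lcs_subgrp C n) => K1 KM KV.
split.
- by split.
- move=> x y [Hx1 Hx2] [Hy1 Hy2]; rewrite sdmulE; split => /=.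
    by apply: (LM) => //; apply: phi_lcs.
  exact: KM.
- move=> x [Hx1 Hx2]; rewrite sdinvE; split => /=.
    by apply: phi_lcs; apply: (LV).
  exact: KV.
Qed.

Lemma F_S i z : Ffil i z -> Ssub i z.
Proof. by case=> a -> Ha; split => //=; apply: lcs1. Qed.

Lemma lcsG_S n z : lcs G n z -> Ssub n z.
Proof.
elim: n z => [|[|n] IH] z //.
move: z; apply: gen_min; first exact: S_subgrp.
move=> _ [x [y [Hx ->]]].
have {}Hx : lcs G n.+1 x := Hx.
case: (IH _ Hx) => Ha Hc.
case: (S_subgrp n.+2) => _ SM SV.
rewrite (decomp x) (decomp y) (commMl (iota x.1) (kap x.2)) (commMr (kap x.2) (iota y.1) (kap y.2)).
have Fx : Ffil n.+1 (iota x.1) by exists x.1.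
have Fy : Ffil 1 (iota y.1) by exists y.1.
have Kc : lcs G n.+1 (kap x.2) by exact: (lcs_hom kapM).
apply: (SM); last apply: (SM).
- apply: F_S; exact: (F_normal (F_step _ Fx) I).
- rewrite -(ghomR kapM); split; [exact: (lcs1 A n.+2) | exact: (@lcs_comm C n.+1 x.2 y.2 Hc)].
- apply: F_S; rewrite -invgR.
  case: (F_subgrp n.+2) => _ _ FV.
  have H3 : Ffil (1 + n.+1) [~ iota y.1, kap x.2].
    apply: (filt_lcs (F := Ffil)) => //.
    + exact: F_subgrp.
    + exact: F_normal.
    + by move=> i u w; apply: F_step.
  rewrite add1n in H3.
  exact: (F_normal (FV _ H3) I).
Qed.

Lemma S_lcsG n z : Ssub n z -> lcs G n z.
Proof.
case=> H1 H2; rewrite (decomp z).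
case: (@lcs_subgrp G n) => _ M _; apply: (M).
  exact: (lcs_hom iotaM).
exact: (lcs_hom kapM).
Qed.

End SD.
Section Tor.
Variable X : groupType.
Implicit Types x y z g : X.

Fixpoint rl (K : X -> Prop) (n : nat) : X -> Prop :=
  match n with
  | 0 => K
  | p.+1 => gen_sub (fun z => exists u k, [/\ rl K p u, K k & z = [~ u, k]])
  end.

Definition tors (N : X -> Prop) x := exists k, (0 < k)%N /\ N (x ^+ k).

Lemma rl_subgrp K n : subgrp K -> subgrp (rl K n).
Proof. by case: n => [|n] //= _; exact: gen_subgrp. Qed.

Lemma rl_sub K n z : subgrp K -> rl K n z -> K z.
Proof.
move=> sK; elim: n z => [|n IH] //=; apply: gen_min => //.
by move=> _ [u [k [Hu Hk ->]]]; apply: subgrp_R => //; apply: IH.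
Qed.

Lemma rl_normal K n : subgrp K -> normalin K (rl K n).
Proof.
move=> sK; elim: n => [|n IH] /=; first by move=> z g Kz Kg; apply: subgrp_J.
apply: gen_normal => _ g [u [k [Hu Hk ->]]] Kg.
by exists (u ^ g), (k ^ g); rewrite conjRg; split => //; [apply: IH | apply: subgrp_J].
Qed.

Lemma rl_comm K n u k : rl K n u -> K k -> rl K n.+1 [~ u, k].
Proof. by move=> Hu Hk; apply: gen_base; exists u, k. Qed.

Lemma lcs_rl n z : lcs X n.+1 z <-> rl (@allX X) n z.
Proof.
elim: n z => [|n IH] z //=; split.
  apply: gen_mono => _ [u [y [Hu ->]]]; exists u, y; split => //.
  by apply/IH.
apply: gen_mono => _ [u [y [Hu _ ->]]]; exists u, y; split => //.
by apply/IH.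
Qed.

Section Cong.
Variables (K N : X -> Prop).
Hypotheses (sK : subgrp K) (sN : subgrp N) (nN : normalin K N).

Lemma cong_mul p q r s : K r -> N (p^-1 * q) -> N (r^-1 * s) ->
  N ((p * r)^-1 * (q * s)).
Proof.
move=> Kr H1 H2; have -> : (p * r)^-1 * (q * s) = (p^-1 * q) ^ r * (r^-1 * s).
  by gsimpl.
by case: sN => _ M _; apply: (M) => //; apply: nN.
Qed.

Lemma cong_X u v e : K u -> N (u^-1 * v) -> N ((u ^+ e)^-1 * v ^+ e).
Proof.
move=> Ku Huv; elim: e => [|e IH].
  by rewrite !expg0 invg1 mul1g; case: sN.
by rewrite !expgSr; apply: cong_mul.
Qed.

Lemma tors_cong u v : K u -> N (u^-1 * v) -> tors N u -> tors N v.
Proof.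
move=> Ku Huv [k [k0 Nk]]; exists k; split => //.
have -> : v ^+ k = u ^+ k * ((u ^+ k)^-1 * v ^+ k) by rewrite mulVKg.
by case: sN => _ M _; apply: (M) => //; apply: cong_X.
Qed.
End Cong.

Fixpoint Pw x y (e : nat) : X :=
  match e with 0 => 1 | e.+1 => Pw x y e * (y ^+ e * x * (y ^+ e)^-1) end.

Lemma Pw_eq x y e : (x * y) ^+ e = Pw x y e * y ^+ e.
Proof.
elim: e => [|e IH] /=; first by rewrite !expg0 mulg1.
by rewrite expgSr IH !expgSr !mulgA mulgVK.
Qed.

Lemma tors_pow N x e : subgrp N -> (0 < e)%N -> tors N (x ^+ e) -> tors N x.
Proof.
move=> _ e0 [k [k0 Hk]]; exists (e * k)%N; split; first by rewrite muln_gt0 e0.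
by rewrite expgnA.
Qed.

Definition TorP n := forall K N, subgrp K -> subgrp N -> normalin K N ->
  (forall z, rl K n z -> N z) ->
  forall x y, K x -> K y -> tors N x -> tors N y -> tors N (x * y).

Lemma Tor0 : TorP 0.
Proof.
move=> K N sK sN nN HKN x y Kx Ky _ _; exists 1%N; split => //.
by rewrite expg1; apply: HKN; case: sK => _ M _; apply: (M).
Qed.

Lemma conj_in K x g : subgrp K -> K x -> K g -> K (g * x * g^-1).
Proof.
move=> sK Kx Kg; have -> : g * x * g^-1 = x ^ g^-1 by rewrite /conjg invgK mulgA.
apply: subgrp_J => //; by case: sK => _ _ V; apply: V.
Qed.

Lemma Tor1 : TorP 1.
Proof.
move=> K N sK sN nN HKN x y Kx Ky [a [a0 Na]] [b [b0 Nb]].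
case: (sK) => K1 KM KV; case: (sN) => N1 NM NV.
have KX := subgrp_X sK.
have KP : forall e, K (Pw x y e).
  elim=> [|e IH] //=; apply: (KM) => //; exact: (conj_in sK Kx (KX _ _ Ky)).
have H1 : forall e, N ((x ^+ e)^-1 * Pw x y e).
  elim=> [|e IH] /=; first by rewrite expg0 invg1 mulg1.
  rewrite expgSr; apply: (cong_mul sN nN) => //.
  have -> : y ^+ e * x * (y ^+ e)^-1 = x ^ (y ^+ e)^-1 by rewrite /conjg invgK mulgA.
  rewrite -commgEl; apply: HKN; apply: rl_comm => //.
  by apply: (KV); apply: KX.
have H2 : N ((x ^+ b)^-1 * (x * y) ^+ b).
  by rewrite Pw_eq mulgA; apply: (NM).
have H3 : tors N ((x * y) ^+ b).
  apply: (tors_cong sN nN (u := x ^+ b)) => //; first exact: KX.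
  exists a; split => //; rewrite -expgnA mulnC expgnA.
  exact: subgrp_X.
exact: (tors_pow sN b0 H3).
Qed.

Lemma TorS n : TorP n.+1 -> TorP n.+2.
Proof.
move=> IH K N sK sN nN HKN x y Kx Ky Tx [b [b0 Nb]].
case: (sK) => K1 KM KV; case: (sN) => N1 NM NV.
have KX := subgrp_X sK.
pose K' := gen_sub (fun z => z = x \/ rl K 1 z).
have sK' : subgrp K' := gen_subgrp _.
have K'K : forall z, K' z -> K z.
  apply: gen_min => // z [-> // | Hz]; exact: (rl_sub sK Hz).
have nN' : normalin K' N by move=> z g Nz /K'K Kg; apply: nN.
have nR2 := @rl_normal K 2 sK.
have sR2 := @rl_subgrp K 2 sK.
have gens : forall s t, (s = x \/ rl K 1 s) -> (t = x \/ rl K 1 t) ->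
    rl K 2 [~ s, t].
  move=> s t [-> | Hs] [-> | Ht].
  - by rewrite commgg; case: (sR2).
  - rewrite -invgR; case: (sR2) => _ _ V; apply: V; exact: rl_comm.
  - by apply: rl_comm.
  - by apply: rl_comm => //; apply: (rl_sub sK Ht).
have K'2 : forall u v, K' u -> K' v -> rl K 2 [~ u, v].
  move=> u v Ku Kv.
  have step1 : forall t, (t = x \/ rl K 1 t) -> forall u, K' u -> rl K 2 [~ u, t].
    move=> t Ht; apply: (comm_gen_l sR2 nR2 K'K) => s Hs; exact: gens.
  rewrite -invgR; case: (sR2) => _ _ V; apply: V.
  move: v Kv; apply: (comm_gen_l sR2 nR2 K'K) => s Hs.
  rewrite -invgR; case: (sR2) => _ _ V'; apply: V'; exact: step1.
have sub' : forall m z, rl K' m.+1 z -> rl K m.+2 z.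
  elim=> [|m IHm] z /=.
    apply: gen_min => // _ [u [k [Hu Hk ->]]]; exact: K'2.
  apply: gen_mono => _ [u [k [Hu Hk ->]]]; exists u, k; split => //.
    exact: IHm.
  exact: K'K.
have IH' := IH K' N sK' sN nN' (fun z Hz => HKN z (sub' n z Hz)).
have Kx' : K' x by apply: gen_base; left.
have KP : forall e, K' (Pw x y e) /\ tors N (Pw x y e).
  elim=> [|e [KPe TPe]] /=.
    split; first by case: (sK').
    by exists 1%N; split => //; rewrite expg1.
  have Kc : K' (y ^+ e * x * (y ^+ e)^-1).
    have -> : y ^+ e * x * (y ^+ e)^-1 = x * [~ x, (y ^+ e)^-1].
      by rewrite -conj_comm /conjg invgK mulgA.
    case: (sK') => _ M _; apply: (M) => //; apply: gen_base; right.
    by apply: rl_comm => //; apply: (KV); apply: KX.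
  split; first by case: (sK') => _ M _; apply: (M).
  apply: IH' => //.
  case: Tx => a [a0 Na]; exists a; split => //.
  have -> : y ^+ e * x * (y ^+ e)^-1 = x ^ (y ^+ e)^-1 by rewrite /conjg invgK mulgA.
  rewrite -conjXg; apply: nN => //; apply: (KV); exact: KX.
case: (KP b) => KPb TPb.
have H3 : tors N ((x * y) ^+ b).
  apply: (tors_cong sN nN (u := Pw x y b)) => //; first exact: K'K.
  by rewrite Pw_eq mulKg.
exact: (tors_pow sN b0 H3).
Qed.

Lemma Tor n : TorP n.
Proof.
case: n => [|n]; first exact: Tor0.
elim: n => [|n IH]; first exact: Tor1.
exact: TorS.
Qed.

Lemma rlcs_mul n x y : rlcs X n.+1 x -> rlcs X n.+1 y -> rlcs X n.+1 (x * y).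
Proof.
move=> Hx Hy.
have := @Tor n (@allX X) (lcs X n.+1) _ (@lcs_subgrp X n.+1) _ _ x y I I Hx Hy.
apply.
- by split.
- by move=> z g Hz _; apply: lcs_normal.
- by move=> z /lcs_rl.
Qed.

End Tor.
Unset Implicit Arguments.

Theorem proposition3p2 (A C : groupType) (phi : aut_action A C)
  (htriv : forall (c : C) (a : A), lcs A 2 (a^-1 * phi c a)) :
  forall m : nat, (1 <= m)%N ->
    (forall x : sdprod phi, lcs (sdprod phi) m x <-> sd_sub phi (lcs A m) (lcs C m) x) /\
    (forall x : sdprod phi, rlcs (sdprod phi) m x <-> sd_sub phi (rlcs A m) (rlcs C m) x).
Proof.
case=> [|n] // _.
split => x.
  by split; [exact: (lcsG_S htriv) | exact: S_lcsG].
have sndX : forall (z : sdprod phi) k, (z ^+ k).2 = z.2 ^+ k.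
  by move=> z k; apply: (@ghomX (sdprod phi) C snd (fun a b => erefl)).
split.
- case=> k [k1 Hk]; have [H1 H2] := lcsG_S htriv Hk.
  rewrite sndX in H2.
  split; last by exists k.
  have T1 : rlcs (sdprod phi) n.+1 (kap phi x.2^-1).
    exists k; split => //; rewrite -(ghomX (kapM phi)); apply: S_lcsG; split.
      exact: lcs1.
    rewrite expVgn; case: (@lcs_subgrp C n.+1) => _ _ V; exact: V.
  have T2 := rlcs_mul (ex_intro _ k (conj k1 Hk)) T1.
  have E : x ^+ 1 * kap phi x.2^-1 = iota phi x.1.
    by rewrite expg1 sdmulE /= phi1 mulg1 mulgV.
  rewrite expg1 in E; rewrite E in T2.
  case: T2 => e [e1 He]; exists e; split => //.
  rewrite -(ghomX (iotaM phi)) in He.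
  by case: (lcsG_S htriv He).
- case=> [[k1 [k10 Hk1]] [k2 [k20 Hk2]]].
  rewrite (decomp x); apply: rlcs_mul.
    exists k1; split => //; rewrite -(ghomX (iotaM phi)); apply: S_lcsG.
    by split => //; exact: lcs1.
  exists k2; split => //; rewrite -(ghomX (kapM phi)); apply: S_lcsG.
  by split => //; exact: lcs1.
Qed.
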